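(* Let $X$ and $Y$ be random variables taking values in the finite sets $\mathcal{X}=\{1,\dots,M\}$ and $\mathcal{Y}=\{1,\dots,N\}$, with joint distribution $P_{XY}$. For $\varepsilon\in[\mathsf{P}_{\mathsf{c}}(X),\mathsf{P}_{\mathsf{c}}(X|Y)]$ define $$\mathcal{h}(\varepsilon)=\sup\left\{\mathsf{P}_{\mathsf{c}}(Y|Z)\;:\;P_{Z|Y},\ X - Y - Z,\ \mathsf{P}_{\mathsf{c}}(X|Z)\le\varepsilon\right\},$$ where the supremum is over all channels $P_{Z|Y}$ into a finite alphabet $\mathcal{Z}$ such that $X,Y,Z$ form a Markov chain $X - Y - Z$. Then $\mathcal{h}$ is piecewise linear on $[\mathsf{P}_{\mathsf{c}}(X),\mathsf{P}_{\mathsf{c}}(X|Y)]$: there exist an integer $K\ge 1$ and thresholds $\mathsf{P}_{\mathsf{c}}(X)=\varepsilon_0\le\varepsilon_1\le\dots\le\varepsilon_K=\mathsf{P}_{\mathsf{c}}(X|Y)$ such that $\mathcal{h}$ is linear (affine) on $[\varepsilon_{i-1},\varepsilon_i]$ for each $i=1,\dots,K$.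
   Context: For a discrete random variable $X$, $\mathsf{P}_{\mathsf{c}}(X)=\max_x P_X(x)$ is the probability of correctly guessing $X$. For jointly distributed discrete $X,Z$, $\mathsf{P}_{\mathsf{c}}(X|Z)=\sum_{z}\max_{x}P_{XZ}(x,z)=\sum_z P_Z(z)\max_x P_{X|Z}(x|z)$ is the probability of correctly guessing $X$ from $Z$. $X - Y - Z$ means $X$ and $Z$ are conditionally independent given $Y$ (the channel $P_{Z|Y}$ acts on $Y$ only). *)

(* Defs.v *)
From HB Require Import structures.
From mathcomp Require Import all_boot all_order all_algebra.
From mathcomp Require Import boolp classical_sets reals.
Set Implicit Arguments. Unset Strict Implicit. Unset Printing Implicit Defensive.
Import Order.TTheory GRing.Theory Num.Theory.
Local Open Scope ring_scope.
Local Open Scope classical_set_scope.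

Section Defs.
Variable R : realType.
Variables M N : nat.

Definition is_joint (P : 'I_M -> 'I_N -> R) : Prop :=
  (forall x y, 0 <= P x y) /\ \sum_(x < M) \sum_(y < N) P x y = 1.

Definition is_channel (k : nat) (W : 'I_N -> 'I_k -> R) : Prop :=
  (forall y z, 0 <= W y z) /\ (forall y, \sum_(z < k) W y z = 1).

(* maximum of finitely many nonnegative reals (0 for the empty family) *)
Definition maxf (I : finType) (F : I -> R) : R := \big[Num.max/0]_(i : I) F i.

Definition PcX (P : 'I_M -> 'I_N -> R) : R :=
  maxf (fun x : 'I_M => \sum_(y < N) P x y).

Definition PcXgY (P : 'I_M -> 'I_N -> R) : R :=
  \sum_(y < N) maxf (fun x : 'I_M => P x y).

(* For the Markov chain X - Y - Z, P_XYZ(x,y,z) = P_XY(x,y) W(z|y). *)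
Definition PcXgZ (P : 'I_M -> 'I_N -> R) (k : nat) (W : 'I_N -> 'I_k -> R) : R :=
  \sum_(z < k) maxf (fun x : 'I_M => \sum_(y < N) P x y * W y z).

Definition PcYgZ (P : 'I_M -> 'I_N -> R) (k : nat) (W : 'I_N -> 'I_k -> R) : R :=
  \sum_(z < k) maxf (fun y : 'I_N => (\sum_(x < M) P x y) * W y z).

Definition hfun (P : 'I_M -> 'I_N -> R) (eps : R) : R :=
  sup [set r : R | exists (k : nat) (W : 'I_N -> 'I_k -> R),
         is_channel W /\ PcXgZ P W <= eps /\ r = PcYgZ P W].

End Defs.

(* Main.v *)
Require Import Defs.
From HB Require Import structures.
From mathcomp Require Import all_boot all_order all_algebra.
From mathcomp Require Import boolp classical_sets reals.
From mathcomp Require Import ring lra.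
Set Implicit Arguments. Unset Strict Implicit. Unset Printing Implicit Defensive.
Import Order.TTheory GRing.Theory Num.Theory.
Local Open Scope ring_scope.



Section FM.
Variable R : realType.

Lemma sep (A B : Type) (lo : A -> R) (up : B -> R) (L : seq A) (U : seq B) :
  all (fun p => all (fun q => lo q <= up p) L) U ->
  exists t, all (fun q => lo q <= t) L && all (fun p => t <= up p) U.
Proof.
elim: L => [|q L IH] /= H.
  elim: U {H} => [|p U [t /= Ht]] /=; first by exists 0.
  exists (Num.min (up p) t).
  by rewrite ge_min lexx /= (sub_all _ Ht) // => p' /=; rewrite ge_min orbC => ->.
have H' : all (fun p => all (fun q => lo q <= up p) L) U.
  by apply: sub_all H => p /= /andP[].
case: (IH H') => t /andP[HL HU]; exists (Num.max (lo q) t).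
rewrite le_max lexx /= (sub_all _ HL) /=; last by move=> q' /= Hq; rewrite le_max Hq orbT.
elim: U {IH H'} H HU => //= p U IHU /andP[/andP[h1 _] h2] /andP[h3 h4].
by rewrite ge_max h1 h3 IHU.
Qed.

Lemma all3 (T : Type) (A B C D : pred T) (s : seq T) :
  (forall c, A c -> B c -> C c -> D c) -> all A s -> all B s -> all C s -> all D s.
Proof.
move=> H; elim: s => //= c s IH /andP[a1 a2] /andP[b1 b2] /andP[c1 c2].
by rewrite H // IH.
Qed.

Lemma key (P Q a b : R) : 0 < P -> Q < 0 -> 0 <= P * (a * Q) - Q * (b * P) -> a <= b.
Proof.
move=> hP hQ h; have hK : P * Q < 0 by rewrite pmulr_rlt0.
have : 0 <= (P * Q) * (a - b) by move: h; rewrite !mulrA; lra.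
nra.
Qed.

Lemma ar_neg (cu t a s c2 : R) : cu < 0 -> a <= t -> a * cu = c2 - s -> cu * t + s <= c2.
Proof.
move=> h1 h2 h3; have : cu * t <= cu * a by rewrite ler_nM2l.
rewrite [cu * a]mulrC h3 => h; lra.
Qed.

Lemma ar_pos (cu t a s c2 : R) : 0 < cu -> t <= a -> a * cu = c2 - s -> cu * t + s <= c2.
Proof.
move=> h1 h2 h3; have : cu * t <= cu * a by rewrite ler_pM2l.
rewrite [cu * a]mulrC h3 => h; lra.
Qed.

Lemma ar_c1 (pu qu xu lq lp q2 p2 a b : R) : 0 < pu -> qu < 0 ->
  pu * (qu * xu + lq) - qu * (pu * xu + lp) <= pu * q2 - qu * p2 ->
  a * qu = q2 - lq -> b * pu = p2 - lp -> a <= b.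
Proof.
move=> h1 h2 H ea eb; apply: (key h1 h2).
by rewrite ea eb; move: H; lra.
Qed.

Lemma ar_c2 (xu pu qu t lp lq p2 q2 : R) : 0 < pu -> qu < 0 ->
  pu * t + lp <= p2 -> qu * t + lq <= q2 ->
  pu * (qu * xu + lq) - qu * (pu * xu + lp) <= pu * q2 - qu * p2.
Proof.
move=> pp qq Hp Hq.
have h1 := ler_wpM2l (ltW pp) Hq.
have h2 : 0 <= - qu by rewrite oppr_ge0 ltW.
have h3 := ler_wpM2l h2 Hp.
move: h1 h3; lra.
Qed.

Variable V : finType.
Definition cstr := ((V -> R) * R)%type.
Definition lform (a : V -> R) (x : V -> R) := \sum_v a v * x v.
Definition sat (x : V -> R) (c : cstr) : bool := lform c.1 x <= c.2.
Definition upd (x : V -> R) u t := fun v => if v == u then t else x v.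

Lemma lform_upd a x u t : lform a (upd x u t) = a u * t + lform a (upd x u 0).
Proof.
rewrite /lform (bigD1 u) //= [X in _ = _ + X](bigD1 u) //= /upd eqxx mulr0 add0r.
congr (_ + _); apply: eq_bigr => v /negPf ->; done.
Qed.

Lemma upd_id x u : upd x u (x u) = x.
Proof. by apply: funext => v; rewrite /upd; case: eqP => // ->. Qed.

Lemma upd_upd x u t s : upd (upd x u t) u s = upd x u s.
Proof. by apply: funext => v; rewrite /upd; case: eqP. Qed.

Definition comb u (p q : cstr) : cstr :=
  (fun v => p.1 u * q.1 v - q.1 u * p.1 v, p.1 u * q.2 - q.1 u * p.2).

Lemma lform_comb u p q x :
  lform (comb u p q).1 x = p.1 u * lform q.1 x - q.1 u * lform p.1 x.
Proof.
rewrite /lform /= !mulr_sumr -sumrB; apply: eq_bigr => v _; ring.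
Qed.

Definition FM u (S : seq cstr) : seq cstr :=
  [seq c <- S | c.1 u == 0] ++
  flatten [seq [seq comb u p q | q <- [seq c <- S | c.1 u < 0]]
          | p <- [seq c <- S | 0 < c.1 u]].

Lemma all_flat (T : Type) (P : pred T) (s : seq (seq T)) :
  all P (flatten s) = all (all P) s.
Proof. by elim: s => //= a s IH; rewrite all_cat IH. Qed.

Lemma FM_spec u S x :
  all (sat x) (FM u S) <-> exists t, all (sat (upd x u t)) S.
Proof.
set x0 := upd x u 0.
have Ex c : lform c.1 x = c.1 u * x u + lform c.1 x0.
  by rewrite -{1}(upd_id x u) lform_upd.
have Et c t : lform c.1 (upd x u t) = c.1 u * t + lform c.1 x0.
  by rewrite lform_upd.
rewrite /FM all_cat all_flat all_map !all_filter.
split.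
  case/andP=> Hz Hc.
  pose lo (q : cstr) := (q.2 - lform q.1 x0) / q.1 u.
  have Hs : all (fun p => all (fun q => lo q <= lo p) [seq c <- S | c.1 u < 0])
     [seq c <- S | 0 < c.1 u].
    rewrite all_filter; apply: sub_all Hc => p /= /implyP Hp; apply/implyP => pp.
    move: (Hp pp); rewrite all_map all_filter => H; rewrite all_filter.
    apply: sub_all H => q /= /implyP Hq.
    apply/implyP => qq; move: (Hq qq); rewrite /sat lform_comb !Ex /lo => H.
    set a := _ / q.1 u; set b := _ / p.1 u.
    have ea : a * q.1 u = q.2 - lform q.1 x0 by rewrite /a divfK // lt_eqF.
    have eb : b * p.1 u = p.2 - lform p.1 x0 by rewrite /b divfK // gt_eqF.
    exact: (ar_c1 pp qq H ea eb).
  have [t /andP[Hlo Hup]] := sep Hs.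
  exists t; rewrite all_filter in Hlo; rewrite all_filter in Hup.
  apply: (all3 _ Hz Hlo Hup) => c /implyP z /implyP l /implyP g.
  rewrite /sat Et.
  case: (ltrgtP (c.1 u) 0) => cu.
  - move: (l cu); rewrite /lo; set a := _ / c.1 u => H.
    have ea : a * c.1 u = c.2 - lform c.1 x0 by rewrite /a divfK // lt_eqF.
    exact: (ar_neg cu H ea).
  - move: (g cu); rewrite /lo; set a := _ / c.1 u => H.
    have ea : a * c.1 u = c.2 - lform c.1 x0 by rewrite /a divfK // gt_eqF.
    exact: (ar_pos cu H ea).
  - by move: (cu) => /eqP cu'; move: (z cu'); rewrite /sat Ex cu !mul0r.
case=> t Ht; apply/andP; split.
  apply: sub_all Ht => c /=; rewrite /sat Et Ex => H; apply/implyP => /eqP e.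
  by move: H; rewrite e !mul0r.
have Ht' := Ht; apply: sub_all Ht => p Hp; apply/implyP => pp; rewrite /preim /= all_map all_filter.
apply: sub_all Ht' => q Hq; apply/implyP => qq /=.
move: Hp Hq; rewrite /sat lform_comb !(Et _ _ t) !Ex => Hp Hq.
exact: (ar_c2 _ pp qq Hp Hq).
Qed.

Fixpoint elimL (us : seq V) (S : seq cstr) : seq cstr :=
  if us is u :: us' then elimL us' (FM u S) else S.

Lemma elimL_spec us S x :
  all (sat x) (elimL us S) <->
  exists y, (forall v, v \notin us -> y v = x v) /\ all (sat y) S.
Proof.
elim: us S x => [|u us IH] S x /=.
  split; first by move=> H; exists x.
  by case=> y [Hy H]; have -> : x = y by apply: funext => v; rewrite Hy.
rewrite IH; split.
  case=> y [Hy /FM_spec [t Ht]]; exists (upd y u t); split => // v.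
  rewrite in_cons negb_or => /andP[vu vus]; rewrite /upd (negPf vu) Hy //.
case=> z [Hz H]; exists (upd z u (x u)); split.
  move=> v vus; rewrite /upd; case: eqP => [-> //|/eqP vu].
  by rewrite Hz // in_cons negb_or vu.
by apply/FM_spec; exists (z u); rewrite upd_upd upd_id.
Qed.

End FM.



Section PW.
Variable R : realType.

Lemma pw (L U : R) (fs : seq (R * R)) (h : R -> R) :
  L <= U ->
  (forall t, L <= t -> t <= U ->
     all (fun f => h t <= f.1 * t + f.2) fs && has (fun f => f.1 * t + f.2 <= h t) fs) ->
  exists (K : nat) (e : nat -> R),
    (1 <= K)%N /\ e 0%N = L /\ e K = U /\
    (forall i : nat, (i < K)%N -> e i <= e i.+1) /\
    (forall i : nat, (1 <= i <= K)%N ->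
       exists a b : R, forall t : R, e i.-1 <= t -> t <= e i -> h t = a * t + b).
Proof.
move=> LU Hh.
pose cr := [seq (g.2 - f.2) / (f.1 - g.1) | f <- fs, g <- fs].
pose s := sort <=%R (L :: U :: [seq r <- cr | (L <= r) && (r <= U)]).
have Hs : sorted <=%R s by apply: sort_sorted; exact: le_total.
have Ss : size s = (size [seq r <- cr | (L <= r) && (r <= U)]).+2 by rewrite size_sort.
have Ls : L \in s by rewrite mem_sort in_cons eqxx.
have Us : U \in s by rewrite mem_sort !in_cons eqxx orbT.
have Bs r : r \in s -> L <= r <= U.
  rewrite mem_sort !in_cons => /orP[/eqP->|/orP[/eqP->|]]; rewrite ?lexx ?LU //.
  by rewrite mem_filter => /andP[].
have leT : transitive (<=%R : rel R) by move=> ? ? ?; apply: le_trans.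
have mono i j : (i <= j)%N -> (j < size s)%N -> nth 0 s i <= nth 0 s j.
  move=> ij js; apply: (sorted_leq_nth leT lexx) => //.
  by rewrite inE (leq_ltn_trans ij js).
exists (size s).-1, (nth 0 s).
have K1 : (1 <= (size s).-1)%N by rewrite Ss.
have Kl : ((size s).-1 < size s)%N by rewrite Ss.
have inS i : (i < size s)%N -> L <= nth 0 s i <= U by move=> ?; apply/Bs/mem_nth.
split => //; split.
  apply/le_anti/andP; split.
    rewrite -[X in _ <= X](nth_index 0 Ls); apply: mono => //; by rewrite index_mem.
  by case/andP: (inS 0%N (leq_ltn_trans (leq0n _) Kl)).
split.
  apply/le_anti/andP; split; last first.
    rewrite -[X in X <= _](nth_index 0 Us); apply: mono => //.
    by rewrite -ltnS (ltn_predK Kl) index_mem.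
  by case/andP: (inS _ Kl).
split; first by move=> i iK; apply: mono => //; apply: leq_ltn_trans iK Kl.
move=> i /andP[i1 iK].
have iS : (i < size s)%N by apply: leq_ltn_trans iK Kl.
have i'S : (i.-1 < size s)%N by rewrite (leq_ltn_trans (leq_pred i) iS).
have ab : nth 0 s i.-1 <= nth 0 s i by apply: mono => //; exact: leq_pred.
have /andP[La0 a0U] := inS _ i'S; have /andP[Lb0 b0U] := inS _ iS.
pose m := (nth 0 s i.-1 + nth 0 s i) / 2.
have m2 : m * 2 = nth 0 s i.-1 + nth 0 s i by rewrite /m divfK // pnatr_eq0.
have [Lm mU] : L <= m /\ m <= U by split; lra.
have /andP[_ /hasP[f fin Hf]] := Hh m Lm mU.
exists f.1, f.2 => t ta tb.
have Lt : L <= t by apply: le_trans ta.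
have tU : t <= U by apply: le_trans b0U.
have /andP[/allP Hall /hasP[g gin Hg]] := Hh t Lt tU.
have := Hall f fin; have /andP[/allP Hallm _] := Hh m Lm mU.
have Hgm := Hallm g gin => /= Hft.
suff : f.1 * t + f.2 <= g.1 * t + g.2 by move=> /= H; apply/le_anti; rewrite Hft /=; lra.
set d := f.1 - g.1.
have [d0|dn0] := eqVneq d 0.
  have e1 : f.1 = g.1 by apply/eqP; rewrite -subr_eq0 -/d d0.
  move: Hf Hgm; rewrite e1 => /= Hf Hgm; lra.
set r := (g.2 - f.2) / d.
have dr : d * r = g.2 - f.2 by rewrite /r mulrC divfK.
have rcr : r \in cr by apply: (allpairs_f (fun f g => (g.2 - f.2) / (f.1 - g.1)) fin gin).
have side : r <= nth 0 s i.-1 \/ nth 0 s i <= r.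
  case: (boolP ((L <= r) && (r <= U))) => Hr.
    have rs : r \in s by rewrite mem_sort !in_cons mem_filter Hr rcr !orbT.
    have jS := rs; rewrite -index_mem in jS.
    case: (leqP (index r s) i.-1) => ji.
      by left; rewrite -(nth_index 0 rs); apply: mono.
    right; rewrite -(nth_index 0 rs); apply: mono => //.
    by rewrite -(prednK i1).
  move: Hr; rewrite negb_and -!ltNge => /orP[rL|Ur]; [left|right]; lra.
have Em : f.1 * m + f.2 - (g.1 * m + g.2) = d * (m - r) by rewrite mulrBr dr /d; ring.
have Et : f.1 * t + f.2 - (g.1 * t + g.2) = d * (t - r) by rewrite mulrBr dr /d; ring.
have Hm : d * (m - r) <= 0 by rewrite -Em; lra.
suff : d * (t - r) <= 0 by rewrite -Et; lra.
case: side => sd; case: (lerP d 0) => dd.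
- nra.
- have : m - r <= 0 by rewrite -(pmulr_rle0 _ dd).
  move=> mr; have -> : t = r by lra.
  by rewrite subrr mulr0.
- have dlt : d < 0 by rewrite lt_neqAle dn0 dd.
  have : 0 <= m - r by rewrite -(nmulr_rle0 _ dlt).
  move=> mr; have -> : t = r by lra.
  by rewrite subrr mulr0.
- nra.
Qed.
End PW.



Section Maxf.
Variable R : realType.
Variable I : finType.
Implicit Types F : I -> R.

Lemma maxf_ge F j : F j <= maxf F.
Proof.
rewrite /maxf; have : j \in index_enum I by rewrite mem_index_enum.
elim: (index_enum I) => //= i r IH; rewrite in_cons big_cons le_max.
by case/orP => [/eqP->|/IH->]; rewrite ?lexx ?orbT.
Qed.

Lemma maxf_le F c : 0 <= c -> (forall i, F i <= c) -> maxf F <= c.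
Proof.
move=> c0 H; rewrite /maxf; elim/big_rec: _ => // i x _ Hx.
by rewrite ge_max H Hx.
Qed.

Lemma maxf_ge0 F : 0 <= maxf F.
Proof. rewrite /maxf; elim/big_rec: _ => // i x _ Hx; by rewrite le_max Hx orbT. Qed.

Lemma maxf_att F (i0 : I) : (forall i, 0 <= F i) -> exists i, maxf F = F i.
Proof.
move=> F0.
have : maxf F = 0 \/ exists i, maxf F = F i.
  rewrite /maxf; elim/big_rec: _ => [|i x _ [->|[j ->]]]; first by left.
  - by right; exists i; apply/max_idPl.
  - case: (leP (F i) (F j)) => h; right.
      by exists j.
    by exists i.
case=> [H|//]; exists i0; apply/le_anti; rewrite H F0 /=; rewrite -H; exact: maxf_ge.
Qed.
End Maxf.



Section Chan.
Variable R : realType.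
Variables M N : nat.
Variable P : 'I_M -> 'I_N -> R.
Hypothesis P0 : forall x y, 0 <= P x y.

Local Notation AB := ('I_N * 'I_M)%type.
Definition PY (y : 'I_N) := \sum_(x < M) P x y.

Lemma PY0 y : 0 <= PY y.
Proof. by apply: sumr_ge0 => x _; apply: P0. Qed.

Definition LP (eps v : R) (w : 'I_N -> AB -> R) : Prop :=
  [/\ forall a p, 0 <= w a p,
      forall a, \sum_p w a p = 1,
      forall p x, \sum_a P x a * w a p <= \sum_a P p.2 a * w a p,
      \sum_a \sum_p P p.2 a * w a p <= eps &
      v <= \sum_p PY p.1 * w p.1 p].

Lemma part k (f : 'I_k -> AB) (G : 'I_k -> AB -> R) :
  \sum_p \sum_(z | f z == p) G z p = \sum_z G z (f z).
Proof.
rewrite [RHS](partition_big f predT) //=; apply: eq_bigr => p _.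
by apply: eq_bigr => z /eqP <-.
Qed.

Variables (x0 : 'I_M) (y0 : 'I_N).

Lemma fromW eps k (W : 'I_N -> 'I_k -> R) :
  is_channel W -> PcXgZ P W <= eps ->
  exists w, LP eps (PcYgZ P W) w.
Proof.
case=> W0 W1 Heps.
have [a Ha] := choice (fun z => @maxf_att R _ (fun y => PY y * W y z) y0
   (fun y => mulr_ge0 (PY0 y) (W0 y z))).
have [b Hb] := choice (fun z => @maxf_att R _ (fun x => \sum_y P x y * W y z) x0
   (fun x => sumr_ge0 _ (fun y _ => mulr_ge0 (P0 x y) (W0 y z)))).
pose f z : AB := (a z, b z).
exists (fun y p => \sum_(z | f z == p) W y z); split.
- by move=> y p; apply: sumr_ge0 => z _; apply: W0.
- by move=> y; rewrite (part f (fun z _ => W y z)) W1.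
- move=> p x; under eq_bigr => ? _ do rewrite mulr_sumr.
  under [X in _ <= X]eq_bigr => ? _ do rewrite mulr_sumr.
  rewrite (exchange_big_dep predT) //= [X in _ <= X](exchange_big_dep predT) //=.
  apply: ler_sum => z _; case: (eqVneq (f z) p) => [<-|_]; last by rewrite !big_pred0.
  rewrite /= -Hb; exact: (maxf_ge (fun x => \sum_y P x y * W y z)).
- rewrite exchange_big /=; rewrite (eq_bigr (fun p => \sum_(z | f z == p) \sum_y P p.2 y * W y z)).
    by rewrite part /=; apply: le_trans Heps; rewrite /PcXgZ; apply: ler_sum => z _; rewrite Hb.
  move=> p _; under eq_bigr => ? _ do rewrite mulr_sumr.
  rewrite (exchange_big_dep (fun j => f j == p)) //=.
  by apply: eq_bigr => z zp; apply: eq_bigl => i; rewrite zp.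
- rewrite (eq_bigr (fun p => \sum_(z | f z == p) PY (f z).1 * W (f z).1 z)).
    by rewrite part /PcYgZ; apply: ler_sum => z _; rewrite Ha.
  by move=> p _; rewrite mulr_sumr; apply: eq_bigr => z /eqP ->.
Qed.
Lemma sum_ev (F : AB -> R) : \sum_(z < #|{: AB}|) F (enum_val z) = \sum_p F p.
Proof. rewrite -(big_enum_val (A:={: AB})); apply: eq_bigl => x; by rewrite inE. Qed.

Lemma toW eps v w : LP eps v w ->
  exists k (W : 'I_N -> 'I_k -> R), is_channel W /\ PcXgZ P W <= eps /\ v <= PcYgZ P W.
Proof.
case=> w0 w1 wc we wv.
exists #|{: AB}|, (fun y z => w y (enum_val z)); split; [split|split].
- by move=> y z; apply: w0.
- by move=> y; rewrite (sum_ev (w y)).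
- apply: le_trans we; rewrite exchange_big /= -(sum_ev (fun p => \sum_a P p.2 a * w a p)).
  apply: ler_sum => z _; apply: maxf_le => [|x]; last exact: wc.
  by apply: sumr_ge0 => a _; apply: mulr_ge0.
- apply: le_trans wv _; rewrite -(sum_ev (fun p => PY p.1 * w p.1 p)) /PcYgZ.
  apply: ler_sum => z _; exact: (maxf_ge (fun y => PY y * w y (enum_val z))).
Qed.
End Chan.



Lemma sum_ind (R : realType) (I : finType) (F : I -> R) i0 :
  \sum_i (i == i0)%:R * F i = F i0.
Proof.
rewrite (bigD1 i0) //= eqxx mul1r big1 ?addr0 // => i /negPf ->; exact: mul0r.
Qed.

Section Sys.
Variable R : realType.
Variables M N : nat.
Variable P : 'I_M -> 'I_N -> R.
Local Notation AB := ('I_N * 'I_M)%type.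
Local Notation T := ('I_N * AB)%type.
Local Notation V := (bool + T)%type.

Definition mk (ce cv : R) (g : T -> R) : V -> R :=
  fun u => match u with inl true => ce | inl false => cv | inr t => g t end.

Definition Wof (y : V -> R) := fun a (p : AB) => y (inr (a, p)).

Lemma lform_mk ce cv g (y : V -> R) :
  lform (mk ce cv g) y = ce * y (inl true) + cv * y (inl false) +
     \sum_a \sum_p g (a, p) * Wof y a p.
Proof.
rewrite /lform big_sumType /= big_bool /=; congr (_ + _).
by rewrite pair_big; apply: eq_bigr => -[].
Qed.

Definition c_nn (t : T) : cstr R V := (mk 0 0 (fun t' => (t' == t)%:R * -1), 0).
Definition c_s1 (a0 : 'I_N) : cstr R V := (mk 0 0 (fun t => (t.1 == a0)%:R), 1).
Definition c_s2 (a0 : 'I_N) : cstr R V := (mk 0 0 (fun t => - (t.1 == a0)%:R), -1).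
Definition c_cone (p0 : AB) (x : 'I_M) : cstr R V :=
  (mk 0 0 (fun t => (t.2 == p0)%:R * (P x t.1 - P p0.2 t.1)), 0).
Definition c_eps : cstr R V := (mk (-1) 0 (fun t => P t.2.2 t.1), 0).
Definition c_obj : cstr R V :=
  (mk 0 1 (fun t => - ((t.2.1 == t.1)%:R * PY P t.1)), 0).

Definition S0 : seq (cstr R V) :=
  [seq c_nn t | t <- enum {: T}] ++
  flatten [seq [:: c_s1 a; c_s2 a] | a <- enum 'I_N] ++
  flatten [seq [seq c_cone p x | x <- enum 'I_M] | p <- enum {: AB}] ++
  [:: c_eps; c_obj].

Lemma allE (I : finType) (Q : pred I) : all Q (enum {: I}) <-> forall i, Q i.
Proof.
split; first by move=> /allP H i; apply: H; rewrite mem_enum.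
by move=> H; apply/allP => i _; apply: H.
Qed.

Lemma allmapE (I : finType) (A : Type) (f : I -> A) (Q : pred A) :
  all Q [seq f i | i <- enum {: I}] <-> forall i, Q (f i).
Proof.
rewrite all_map; split; first by move=> /allP H i; apply: H; rewrite mem_enum.
by move=> H; apply/allP => i _; apply: H.
Qed.

Lemma allflatE (I : finType) (A : Type) (F : I -> seq A) (Q : pred A) :
  all Q (flatten [seq F i | i <- enum {: I}]) <-> forall i, all Q (F i).
Proof. by rewrite all_flat; apply: (allmapE F (all Q)). Qed.

Lemma S0_spec y : all (sat y) S0 <-> LP P (y (inl true)) (y (inl false)) (Wof y).
Proof.
have Enn t : sat y (c_nn t) = (0 <= Wof y t.1 t.2).
  rewrite /sat lform_mk !mul0r !add0r.
  under eq_bigr => a _ do under eq_bigr => p _ do rewrite mulrAC.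
  rewrite pair_big /=.
  rewrite (eq_bigr (fun t' : T => (t' == t)%:R * (Wof y t'.1 t'.2 * -1))); last by move=> -[a p] _ /=; rewrite mulrA.
  by rewrite sum_ind mulrN1 oppr_le0.
have Es a0 : \sum_a \sum_p ((a, p).1 == a0)%:R * Wof y a p = \sum_p Wof y a0 p.
  under eq_bigr => a _ do rewrite -mulr_sumr.
  by rewrite sum_ind.
have E1 a0 : sat y (c_s1 a0) = (\sum_p Wof y a0 p <= 1).
  by rewrite /sat lform_mk !mul0r !add0r Es.
have E2 a0 : sat y (c_s2 a0) = (1 <= \sum_p Wof y a0 p).
  rewrite /sat lform_mk !mul0r !add0r.
  under eq_bigr => a _ do under eq_bigr => p _ do rewrite mulNr.
  under eq_bigr => a _ do rewrite sumrN.
  by rewrite sumrN Es lerN2.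
have Ec p0 x : sat y (c_cone p0 x) =
    (\sum_a P x a * Wof y a p0 <= \sum_a P p0.2 a * Wof y a p0).
  rewrite /sat lform_mk !mul0r !add0r /=.
  under eq_bigr => a _ do under eq_bigr => p _ do rewrite -mulrA.
  under eq_bigr => a _ do rewrite sum_ind.
  rewrite -[X in _ = X]subr_le0 -sumrB; congr (_ <= _); apply: eq_bigr => a _; ring.
have Ee : sat y c_eps = (\sum_a \sum_p P p.2 a * Wof y a p <= y (inl true)).
  by rewrite /sat lform_mk mul0r addr0 mulN1r /= addrC subr_le0.
have Eo : sat y c_obj = (y (inl false) <= \sum_p PY P p.1 * Wof y p.1 p).
  rewrite /sat lform_mk mul0r add0r mul1r /=.
  under eq_bigr => a _ do under eq_bigr => p _ do rewrite mulNr.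
  under eq_bigr => a _ do rewrite sumrN.
  rewrite sumrN subr_le0 exchange_big /=.
  congr (_ <= _); apply: eq_bigr => p _.
  under eq_bigr => a _ do rewrite (eq_sym p.1) -mulrA.
  by rewrite sum_ind.
rewrite /S0 !all_cat.
split.
  case/and4P => /allmapE Hn /allflatE Hs /allflatE Hc /and3P[He Ho _].
  split.
  - by move=> a p; have := Hn (a, p); rewrite Enn.
  - move=> a; have := Hs a; rewrite /= E1 E2 andbT => H.
    by apply/le_anti.
  - by move=> p x; have := Hc p; move=> /allmapE /(_ x); rewrite Ec.
  - by rewrite -Ee.
  - by rewrite -Eo.
case=> Hn Hs Hc He Ho; apply/and4P; split.
- by apply/allmapE => t; rewrite Enn; case: t => a p; apply: Hn.
- by apply/allflatE => a; rewrite /= E1 E2 Hs lexx.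
- by apply/allflatE => p; apply/allmapE => x; rewrite Ec.
- by rewrite /= Ee Eo He Ho.
Qed.
End Sys.

Section Sys2.
Variable R : realType.
Variables M N : nat.
Variable P : 'I_M -> 'I_N -> R.
Local Notation AB := ('I_N * 'I_M)%type.
Local Notation T := ('I_N * AB)%type.
Local Notation V := (bool + T)%type.

Definition Esys : seq (cstr R V) := elimL [seq inr t | t <- enum {: T}] (S0 P).

Definition xev (e v : R) : V -> R :=
  fun u => match u with inl true => e | inl false => v | inr _ => 0 end.

Lemma sat_xev (c : cstr R V) e v :
  sat (xev e v) c = (c.1 (inl true) * e + c.1 (inl false) * v <= c.2).
Proof.
rewrite /sat /lform big_sumType /= big_bool /= big1 ?addr0 // => t _.
exact: mulr0.
Qed.

Lemma Esys_spec e v : all (sat (xev e v)) Esys <-> exists w, LP P e v w.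
Proof.
rewrite /Esys elimL_spec; split.
  case=> y [Hy /S0_spec H]; exists (Wof y).
  have notin b : (inl b : V) \notin [seq inr t | t <- enum {: T}].
    by apply/mapP => -[].
  by move: H; rewrite (Hy _ (notin true)) (Hy _ (notin false)).
case=> w Hw.
exists (fun u => match u with inl b => xev e v (inl b) | inr t => w t.1 t.2 end).
split.
  case=> [b //|t]; rewrite map_f // mem_enum //.
by apply/S0_spec.
Qed.
End Sys2.



Lemma all_forallP (A X : Type) (H : X -> Prop) (Q : X -> pred A) (Q' : pred A) s :
  (forall c, (forall x, H x -> Q x c) -> Q' c) ->
  (forall x, H x -> all (Q x) s) -> all Q' s.
Proof.
move=> HQ; elim: s => //= c s IH Hall; apply/andP; split.
  by apply: HQ => x Hx; case/andP: (Hall x Hx).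
by apply: IH => x Hx; case/andP: (Hall x Hx).
Qed.

Lemma argmin (R : realType) (A : Type) (val : A -> R) (s : seq A) : s <> [::] ->
  exists m, has (fun a => val a == m) s && all (fun a => m <= val a) s.
Proof.
elim: s => // a s IH _; case: s IH => [|b s] IH.
  by exists (val a); rewrite /= eqxx lexx.
have [m /andP[Hh Ha]] := IH (fun h => ltac:(discriminate)).
case: (leP (val a) m) => h.
  exists (val a); rewrite /= eqxx /= lexx /=.
  by apply: sub_all Ha => c /= hc; apply: le_trans hc.
exists m; apply/andP; split; first by apply/orP; right.
by apply/andP; split; [exact: ltW|].
Qed.

Lemma filter_nil_all (A : Type) (p : pred A) s : [seq c <- s | p c] = [::] -> all (predC p) s.
Proof. by elim: s => //= c s IH; case: (p c) => //= /IH. Qed.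

Lemma has_all (A : Type) (p q : pred A) s : has p s -> all q s -> has (fun a => p a && q a) s.
Proof. by elim: s => //= c s IH /orP[h|h] /andP[h1 h2]; rewrite ?h ?h1 // IH ?orbT. Qed.

Lemma sat_pos (R : realType) (a b g t v : R) : 0 < b ->
  (a * t + b * v <= g) = (v <= (- a / b) * t + g / b).
Proof.
move=> hb; have -> : (- a / b) * t + g / b = (g - a * t) / b.
  by field; rewrite gt_eqF.
by rewrite ler_pdivlMr // mulrC; apply/idP/idP => h; lra.
Qed.

Lemma ar_np (R : realType) (a b g t v r : R) : b <= 0 -> r <= v ->
  a * t + b * r <= g -> a * t + b * v <= g.
Proof. move=> hb hrv h; have : b * v <= b * r by rewrite ler_wnM2l. lra. Qed.

Section Final.
Variable R : realType.
Variables M N : nat.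
Variable P : 'I_M -> 'I_N -> R.
Hypothesis P0 : forall x y, 0 <= P x y.
Hypothesis Psum : \sum_(x < M) \sum_(y < N) P x y = 1.
Variables (x0 : 'I_M) (y0 : 'I_N).

Definition hset (e : R) : set R := [set r : R | exists (k : nat) (W : 'I_N -> 'I_k -> R),
         is_channel W /\ PcXgZ P W <= e /\ r = PcYgZ P W].

Lemma hfunE e : hfun P e = sup (hset e).
Proof. by []. Qed.

Lemma PcYgZ_le1 k (W : 'I_N -> 'I_k -> R) : is_channel W -> PcYgZ P W <= 1.
Proof.
case=> W0 W1; apply: (@le_trans _ _ (\sum_(z < k) \sum_y PY P y * W y z)).
  apply: ler_sum => z _; apply: maxf_le.
    by apply: sumr_ge0 => y _; apply: mulr_ge0 (PY0 P0 y) (W0 y z).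
  move=> y; rewrite (bigD1 y) //= lerDl; apply: sumr_ge0 => y' _.
  by apply: mulr_ge0 (PY0 P0 y') (W0 y' z).
rewrite exchange_big /=.
under eq_bigr => y _ do rewrite -mulr_sumr W1 mulr1.
by rewrite /PY exchange_big /= Psum.
Qed.

Definition W1c : 'I_N -> 'I_1 -> R := fun _ _ => 1.

Lemma W1c_ch : is_channel W1c.
Proof. by split => [//|y]; rewrite big_ord1. Qed.

Lemma W1c_X : PcXgZ P W1c = PcX P.
Proof.
rewrite /PcXgZ big_ord1 /PcX; congr maxf; apply: funext => x.
by apply: eq_bigr => y _; rewrite /W1c mulr1.
Qed.

Lemma LU : PcX P <= PcXgY P.
Proof.
rewrite /PcX /PcXgY; apply: maxf_le.
  by apply: sumr_ge0 => y _; apply: maxf_ge0.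
move=> x; apply: ler_sum => y _; exact: (maxf_ge (fun x => P x y)).
Qed.

Lemma LPchar e v : (exists w, LP P e v w) <-> exists r, hset e r /\ v <= r.
Proof.
split.
  case=> w Hw; have [k [W [HW [He Hv]]]] := toW P0 Hw.
  by exists (PcYgZ P W); split => //; exists k, W.
case=> r [[k [W [HW [He ->]]]] vr].
have [w [h1 h2 h3 h4 h5]] := fromW P0 x0 y0 HW He.
by exists w; split => //; apply: le_trans h5.
Qed.

Lemma hasE (A : Type) (p : pred A) s : has p s -> exists a, p a.
Proof. by elim: s => //= c s IH /orP[h|/IH]; [exists c|]. Qed.

Lemma main :
  exists (K : nat) (e : nat -> R),
    (1 <= K)%N /\ e 0%N = PcX P /\ e K = PcXgY P /\
    (forall i : nat, (i < K)%N -> e i <= e i.+1) /\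
    (forall i : nat, (1 <= i <= K)%N ->
       exists a b : R, forall t : R, e i.-1 <= t -> t <= e i ->
         hfun P t = a * t + b).
Proof.
set Lf := [seq c <- Esys P | 0 < c.1 (inl false)].
pose val (t : R) (c : cstr R (bool + ('I_N * ('I_N * 'I_M)))%type) := (- c.1 (inl true) / c.1 (inl false)) * t + c.2 / c.1 (inl false).
pose fs := [seq (- c.1 (inl true) / c.1 (inl false), c.2 / c.1 (inl false)) | c <- Lf].
apply: (pw (h := hfun P) (fs := fs) LU) => t Lt tU.
have r1in : hset t (PcYgZ P W1c).
  by exists 1%N, W1c; rewrite W1c_X; split => //; exact: W1c_ch.
have ne : (hset t !=set0)%classic by exists (PcYgZ P W1c).
have ub : ubound (hset t) 1 by move=> r [k [W [HW [_ ->]]]]; apply: PcYgZ_le1.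
have hs : has_sup (hset t) by split => //; exists 1.
have satr r : hset t r -> all (sat (xev t r)) (Esys P).
  by move=> hr; apply/Esys_spec/LPchar; exists r; split.
have rle r : hset t r -> r <= hfun P t by move=> hr; rewrite hfunE; apply: sup_upper_bound.
have fromsat v : all (sat (xev t v)) (Esys P) -> v <= hfun P t.
  by move=> /Esys_spec/LPchar [r [hr vr]]; apply: le_trans vr (rle r hr).
have hle1 : hfun P t <= 1 by rewrite hfunE; apply: ge_sup.
apply/andP; split.
  rewrite all_map /Lf all_filter.
  apply: (all_forallP (H := hset t) (Q := fun r c => sat (xev t r) c) _ satr) => c Hc.
  apply/implyP => cpos /=; rewrite hfunE; apply: ge_sup => // r hr.
  by have := Hc r hr; rewrite sat_xev sat_pos.
rewrite has_map.
have allr1 := satr _ r1in.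
case: (posnP (size Lf)) => [/size0nil Ef|Lpos].
  exfalso.
  have Hn := filter_nil_all Ef.
  pose v := Num.max (PcYgZ P W1c) 2.
  have : all (sat (xev t v)) (Esys P).
    apply: (all3 (C := predT) _ allr1 Hn (all_predT _)) => c h1 h2 _.
    move: h1; rewrite !sat_xev; apply: ar_np; first by rewrite leNgt.
    by rewrite le_max lexx.
  move/fromsat => h; have : 2 <= v by rewrite le_max lexx orbT.
  lra.
have Lne : Lf <> [::] by move=> E; rewrite E in Lpos.
have [m /andP[Hh Ha]] := argmin (val t) Lne.
have Lall : all (fun c => 0 < c.1 (inl false)) Lf by apply: filter_all.
have Lr1 : all (sat (xev t (PcYgZ P W1c))) Lf.
  by rewrite /Lf all_filter; apply: sub_all allr1 => c h; apply/implyP.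
have [c /andP[/andP[/eqP cm cpos] cs]] := hasE (has_all (has_all Hh Lall) Lr1).
have r1m : PcYgZ P W1c <= m by rewrite -cm; move: cs; rewrite sat_xev sat_pos.
have Ha' : all (fun c => (0 < c.1 (inl false)) ==> (m <= val t c)) (Esys P).
  by rewrite -all_filter.
have : all (sat (xev t m)) (Esys P).
  apply: (all3 (C := predT) _ allr1 Ha' (all_predT _)) => c' h1 h2 _.
  case: (ltP 0 (c'.1 (inl false))) => hb.
    by rewrite sat_xev sat_pos //; move: h2; rewrite hb.
  by move: h1; rewrite !sat_xev; apply: ar_np.
move/fromsat => mh.
by apply: sub_has Hh => c' /eqP cm'; rewrite /preim /= -/(val t c') cm'.
Qed.
End Final.

Theorem theorem1 (R : realType) (M N : nat) (P : 'I_M -> 'I_N -> R) :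
  is_joint P ->
  exists (K : nat) (e : nat -> R),
    (1 <= K)%N /\ e 0%N = PcX P /\ e K = PcXgY P /\
    (forall i : nat, (i < K)%N -> e i <= e i.+1) /\
    (forall i : nat, (1 <= i <= K)%N ->
       exists a b : R, forall t : R, e i.-1 <= t -> t <= e i ->
         hfun P t = a * t + b).
Proof.
case=> P0 Psum.
have hM : (0 < M)%N.
  case: (posnP M) => // M0; exfalso; move: Psum; rewrite big1 => [/eqP|x _].
    by rewrite eq_sym oner_eq0.
  by have := leq_trans (ltn_ord x) (eq_leq M0).
have hN : (0 < N)%N.
  case: (posnP N) => // N0; exfalso; move: Psum; rewrite big1 => [/eqP|x _].
    by rewrite eq_sym oner_eq0.
  by apply: big1 => y _; have := leq_trans (ltn_ord y) (eq_leq N0).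
exact: (main P0 Psum (Ordinal hM) (Ordinal hN)).
Qed.
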